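(* Let $\tau=2\pi P/Q$ and $\beta=\nu/P+Q/2\pmod 1$ ($P,Q,\nu$ integers, $Q\ge1$, $P\ne0$), and let $d$ be the integer part of $(Q+1)/2$. If $P$ and $Q$ are coprime (so that $Q=q$, $P=p$), then the $d\times d$ matrix $\mathbf G^{(d)}=\{G_{jk}\}_{1\le j,k\le d}$ is nonsingular.
   Context: Write $P/Q=p/q$ with $p,q$ coprime. $G_{jk}=\frac1Q\sum_{s=0}^{Q-1}e^{2\pi i s(j-k)/Q}a_{s+1}$ for $1\le j,k\le Q$, with $a_r=e^{-i\pi p(r+\beta-1)^2/q}$, $1\le r\le Q$. *)

(* Defs.v *)
From Stdlib Require Import Reals ZArith.
Open Scope R_scope.

(* Complex numbers as (real part, imaginary part). *)
Definition C : Type := (R * R)%type.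
Definition C0 : C := (0, 0).
Definition Cadd (z w : C) : C := (fst z + fst w, snd z + snd w).
Definition Cmul (z w : C) : C :=
  (fst z * fst w - snd z * snd w, fst z * snd w + snd z * fst w).
Definition Cscale (a : R) (z : C) : C := (a * fst z, a * snd z).
Definition Cexpi (theta : R) : C := (cos theta, sin theta).

Fixpoint Csum (f : nat -> C) (n : nat) : C :=
  match n with
  | O => C0
  | S m => Cadd (Csum f m) (f m)
  end.

(* P/Q = p/q in lowest terms (q > 0 when Q > 0). *)
Definition red_p (P Q : Z) : Z := (P / Z.gcd P Q)%Z.
Definition red_q (P Q : Z) : Z := (Q / Z.gcd P Q)%Z.

Definition beta (P Q nu : Z) : R := frac_part (IZR nu / IZR P + IZR Q / 2).

Definition a_coef (P Q nu : Z) (r : nat) : C :=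
  Cexpi (- PI * IZR (red_p P Q) * (INR r + beta P Q nu - 1) ^ 2 / IZR (red_q P Q)).

Definition G (P Q nu : Z) (j k : nat) : C :=
  Cscale (1 / IZR Q)
    (Csum (fun s => Cmul (Cexpi (2 * PI * INR s * (INR j - INR k) / IZR Q))
                         (a_coef P Q nu (S s)))
          (Z.to_nat Q)).

Definition dim_d (Q : Z) : nat := Z.to_nat ((Q + 1) / 2)%Z.

Definition nonsingular (d : nat) (M : nat -> nat -> C) : Prop :=
  forall x : nat -> C,
    (forall j, (1 <= j <= d)%nat ->
       Csum (fun i => Cmul (M j (S i)) (x (S i))) d = C0) ->
    forall k, (1 <= k <= d)%nat -> x k = C0.

(* Main.v *)
From Stdlib Require Import Reals ZArith Lra Lia Psatz Field.
Require Import Defs.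
Open Scope R_scope.

Definition C1 : C := (1, 0).
Definition Copp (z : C) : C := (- fst z, - snd z).
Definition Csub (z w : C) : C := Cadd z (Copp w).
Definition Cinv (z : C) : C :=
  (fst z / (fst z * fst z + snd z * snd z), - snd z / (fst z * fst z + snd z * snd z)).
Definition Cdiv (z w : C) : C := Cmul z (Cinv w).

Lemma C_ring : ring_theory C0 C1 Cadd Cmul Csub Copp eq.
Proof.
  constructor; intros; repeat match goal with z : C |- _ => destruct z end;
  unfold C0, C1, Cadd, Cmul, Csub, Copp; simpl; try reflexivity; f_equal; ring.
Qed.

Lemma C_sq_pos (a b : R) : (a, b) <> C0 -> a * a + b * b <> 0.
Proof.
  intros H E. apply H. unfold C0.
  assert (a = 0) by nra. assert (b = 0) by nra. subst; reflexivity.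
Qed.

Lemma C_field : field_theory C0 C1 Cadd Cmul Csub Copp Cdiv Cinv eq.
Proof.
  constructor.
  - exact C_ring.
  - unfold C1, C0. intro H. injection H. lra.
  - reflexivity.
  - intros [a b] H. pose proof (C_sq_pos a b H).
    unfold Cinv, Cmul, C1; simpl. f_equal; field; auto.
Qed.

Add Field Cfield : C_field.

Lemma test (a b c: C) : c <> C0 -> Cmul (Cadd a b) c = Cadd (Cmul c a) (Cmul b c) /\ Cdiv (Cmul a c) c = a.
Proof. intros; split; [ring| field; auto]. Qed.

Fixpoint Cpow (z : C) (n : nat) : C :=
  match n with O => C1 | S m => Cmul z (Cpow z m) end.

Lemma Cexpi_add a b : Cmul (Cexpi a) (Cexpi b) = Cexpi (a + b).
Proof. unfold Cmul, Cexpi; simpl. rewrite cos_plus, sin_plus. f_equal; ring. Qed.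

Lemma Cexpi_0 : Cexpi 0 = C1.
Proof. unfold Cexpi, C1. rewrite cos_0, sin_0. reflexivity. Qed.

Lemma Cexpi_nat_period x (k : nat) : Cexpi (x + 2 * PI * INR k) = Cexpi x.
Proof.
  unfold Cexpi. replace (x + 2 * PI * INR k) with (x + 2 * INR k * PI) by ring.
  rewrite cos_period, sin_period. reflexivity.
Qed.

Lemma Cexpi_period x (k : Z) : Cexpi (x + 2 * PI * IZR k) = Cexpi x.
Proof.
  destruct (Z_le_gt_dec 0 k) as [H|H].
  - replace (IZR k) with (INR (Z.to_nat k)). apply Cexpi_nat_period.
    rewrite INR_IZR_INZ, Z2Nat.id; auto.
  - set (y := x + 2 * PI * IZR k).
    replace x with (y + 2 * PI * INR (Z.to_nat (- k))).
    + symmetry; apply Cexpi_nat_period.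
    + unfold y. rewrite INR_IZR_INZ, Z2Nat.id by lia. rewrite opp_IZR. ring.
Qed.

Lemma Cexpi_eq a b (k : Z) : a = b + 2 * PI * IZR k -> Cexpi a = Cexpi b.
Proof. intros ->. apply Cexpi_period. Qed.

Lemma Cexpi_neq0 a : Cexpi a <> C0.
Proof.
  unfold Cexpi, C0. intro H. injection H. intros. pose proof (sin2_cos2 a).
  unfold Rsqr in *. rewrite H0, H1 in H2. lra.
Qed.

Lemma Cexpi_one a : Cexpi a = C1 -> exists k : Z, a = 2 * PI * IZR k.
Proof.
  unfold Cexpi, C1. intro H. injection H. intros _ Hc.
  replace a with (2 * (a/2)) in Hc by field.
  rewrite cos_2a_sin in Hc.
  assert (sin (a/2) = 0) by nra.
  destruct (sin_eq_0_0 _ H0) as [k Hk]. exists k. lra.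
Qed.

Lemma Cpow_expi a (n : nat) : Cpow (Cexpi a) n = Cexpi (INR n * a).
Proof.
  induction n; simpl Cpow.
  - rewrite Rmult_0_l, Cexpi_0. reflexivity.
  - rewrite IHn, Cexpi_add, S_INR. f_equal. ring.
Qed.

Lemma Csum_ext f g n : (forall i, (i < n)%nat -> f i = g i) -> Csum f n = Csum g n.
Proof.
  induction n; intros H; simpl; auto. rewrite IHn by (intros; apply H; lia).
  rewrite H by lia. reflexivity.
Qed.

Lemma Csum_add f g n : Csum (fun i => Cadd (f i) (g i)) n = Cadd (Csum f n) (Csum g n).
Proof. induction n; simpl. unfold C0, Cadd; simpl; f_equal; ring. rewrite IHn. ring. Qed.

Lemma Csum_scal c f n : Csum (fun i => Cmul c (f i)) n = Cmul c (Csum f n).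
Proof. induction n; simpl. unfold C0, Cmul; simpl; f_equal; ring. rewrite IHn. ring. Qed.

Lemma Csum_zero f n : (forall i, (i < n)%nat -> f i = C0) -> Csum f n = C0.
Proof. intros H. rewrite (Csum_ext f (fun _ => C0)) by auto. induction n; simpl; auto.
  rewrite IHn; [ring|auto]. Qed.

Lemma Csum_swap (F : nat -> nat -> C) n m :
  Csum (fun i => Csum (fun j => F i j) m) n = Csum (fun j => Csum (fun i => F i j) n) m.
Proof.
  induction n; simpl.
  - symmetry; apply Csum_zero; auto.
  - rewrite IHn. rewrite <- Csum_add. reflexivity.
Qed.

Lemma Csum_delta0 f n : (0 < n)%nat -> (forall i, (0 < i < n)%nat -> f i = C0) -> Csum f n = f O.
Proof.
  intros Hn H. induction n. lia. simpl. destruct n.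
  - simpl. ring.
  - rewrite IHn by (intros; auto with arith || (apply H; lia)). rewrite (H (S n)) by lia. ring.
Qed.

Lemma Csum_shift1 (g : Z -> C) (q : nat) (t : Z) :
  (forall u, g (u + Z.of_nat q)%Z = g u) ->
  Csum (fun s => g (Z.of_nat s + (t + 1))%Z) q = Csum (fun s => g (Z.of_nat s + t)%Z) q.
Proof.
  intros Hp.
  assert (E : forall n, Cadd (Csum (fun s => g (Z.of_nat s + (t + 1))%Z) n) (g t)
                = Cadd (Csum (fun s => g (Z.of_nat s + t)%Z) n) (g (Z.of_nat n + t)%Z)).
  { induction n; cbn [Csum]. replace (Z.of_nat 0 + t)%Z with t by lia; reflexivity.
    transitivity (Cadd (Cadd (Csum (fun s : nat => g (Z.of_nat s + (t + 1))%Z) n) (g t)) (g (Z.of_nat n + (t + 1))%Z)). ring.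
    rewrite IHn. replace (Z.of_nat (S n) + t)%Z with (Z.of_nat n + (t + 1))%Z by lia. ring. }
  specialize (E q). rewrite <- (Hp t) in E.
  replace (t + Z.of_nat q)%Z with (Z.of_nat q + t)%Z in E by lia.
  transitivity (Csub (Cadd (Csum (fun s : nat => g (Z.of_nat s + (t + 1))%Z) q) (g (Z.of_nat q + t)%Z)) (g (Z.of_nat q + t)%Z)). ring.
  rewrite E. ring.
Qed.

Lemma Csum_shift (g : Z -> C) (q : nat) (t : Z) :
  (forall u, g (u + Z.of_nat q)%Z = g u) ->
  Csum (fun s => g (Z.of_nat s + t)%Z) q = Csum (fun s => g (Z.of_nat s)) q.
Proof.
  intros Hp.
  assert (H0 : forall (t0 : Z) (n : nat), Csum (fun s => g (Z.of_nat s + (t0 + Z.of_nat n))%Z) q = Csum (fun s => g (Z.of_nat s + t0)%Z) q).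
  { intros t0. induction n.
    - apply Csum_ext; intros; f_equal; lia.
    - rewrite <- IHn, <- (Csum_shift1 g q (t0 + Z.of_nat n)) by auto.
      apply Csum_ext; intros; f_equal; lia. }
  destruct (Z_le_gt_dec 0 t).
  - transitivity (Csum (fun s => g (Z.of_nat s + (0 + Z.of_nat (Z.to_nat t)))%Z) q).
    + apply Csum_ext; intros; f_equal; lia.
    + rewrite H0. apply Csum_ext; intros; f_equal; lia.
  - rewrite <- (H0 t (Z.to_nat (- t))). apply Csum_ext; intros; f_equal; lia.
Qed.

Lemma vander d : forall (z w : nat -> C),
 (forall k k', (1<=k<=d)%nat -> (1<=k'<=d)%nat -> k<>k' -> z k <> z k') ->
 (forall k, (1<=k<=d)%nat -> z k <> C0) ->
 (forall j, (1<=j<=d)%nat -> Csum (fun i => Cmul (Cpow (z (S i)) j) (w (S i))) d = C0) ->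
 forall k, (1<=k<=d)%nat -> w k = C0.
Proof.
  induction d; intros z w Hd Hz Heq k Hk; [lia|].
  assert (Hlow : forall k, (1 <= k <= d)%nat -> w k = C0).
  { intros k0 Hk0.
    assert (Hw' : forall k, (1<=k<=d)%nat -> Cmul (Csub (z k) (z (S d))) (w k) = C0).
    { apply (IHd z (fun k => Cmul (Csub (z k) (z (S d))) (w k))).
      - intros; apply Hd; lia.
      - intros; apply Hz; lia.
      - intros j Hj.
        pose proof (Heq (S j) ltac:(lia)) as E1. pose proof (Heq j ltac:(lia)) as E2.
        cbn [Csum] in E1, E2.
        assert (E3 : Csum (fun i => Cmul (Cpow (z (S i)) j) (Cmul (Csub (z (S i)) (z (S d))) (w (S i)))) d
          = Csub (Csum (fun i => Cmul (Cpow (z (S i)) (S j)) (w (S i))) d)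
                 (Cmul (z (S d)) (Csum (fun i => Cmul (Cpow (z (S i)) j) (w (S i))) d))).
        { rewrite (Csum_ext _ (fun i => Cadd (Cmul (Cpow (z (S i)) (S j)) (w (S i))) (Cmul (Copp (z (S d))) (Cmul (Cpow (z (S i)) j) (w (S i)))))) by (intros; cbn [Cpow]; unfold Csub; ring).
          rewrite Csum_add, Csum_scal. unfold Csub; ring. }
        rewrite E3.
        assert (Ea : Csum (fun i => Cmul (Cpow (z (S i)) (S j)) (w (S i))) d = Copp (Cmul (Cpow (z (S d)) (S j)) (w (S d)))).
        { transitivity (Csub (Cadd (Csum (fun i => Cmul (Cpow (z (S i)) (S j)) (w (S i))) d) (Cmul (Cpow (z (S d)) (S j)) (w (S d)))) (Cmul (Cpow (z (S d)) (S j)) (w (S d)))). ring.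
          rewrite E1. ring. }
        assert (Eb : Csum (fun i => Cmul (Cpow (z (S i)) j) (w (S i))) d = Copp (Cmul (Cpow (z (S d)) j) (w (S d)))).
        { transitivity (Csub (Cadd (Csum (fun i => Cmul (Cpow (z (S i)) j) (w (S i))) d) (Cmul (Cpow (z (S d)) j) (w (S d)))) (Cmul (Cpow (z (S d)) j) (w (S d)))). ring.
          rewrite E2. ring. }
        rewrite Ea, Eb. cbn [Cpow]. ring. }
    specialize (Hw' k0 Hk0).
    assert (Hne : Csub (z k0) (z (S d)) <> C0).
    { intro E. apply (Hd k0 (S d)); try lia.
      transitivity (Cadd (Csub (z k0) (z (S d))) (z (S d))). ring. rewrite E. ring. }
    transitivity (Cdiv (Cmul (Csub (z k0) (z (S d))) (w k0)) (Csub (z k0) (z (S d)))).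
    field; auto. rewrite Hw'. field; auto. }
  destruct (Nat.eq_dec k (S d)) as [->|]; [|apply Hlow; lia].
  pose proof (Heq 1%nat ltac:(lia)) as E. cbn [Csum] in E.
  rewrite Csum_zero in E by (intros; rewrite (Hlow (S i)) by lia; ring).
  assert (Hn := Hz (S d) ltac:(lia)).
  transitivity (Cdiv (Cmul (z (S d)) (w (S d))) (z (S d))). field; auto.
  replace (Cmul (z (S d)) (w (S d))) with C0. field; auto.
  rewrite <- E. cbn [Cpow]. ring.
Qed.

Definition phi (P Q : Z) (u : R) := - PI * IZR P * u * (u + IZR Q) / IZR Q.
Definition fZ (P Q : Z) (u : Z) := Cexpi (phi P Q (IZR u)).
Definition Nint (P Q nu : Z) := Int_part (IZR nu / IZR P + IZR Q / 2).
Definition Ar (P Q nu : Z) := IZR P * IZR (Nint P Q nu) - IZR nu.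
Definition AZ (P Q nu : Z) := (P * Nint P Q nu - nu)%Z.
Definition Ej (P Q nu b : Z) (j : R) :=
  PI * (IZR P * IZR b ^ 2 * (j + Ar P Q nu) ^ 2 - IZR P * IZR Q * IZR b * (j + Ar P Q nu)) / IZR Q.
Definition Ek (P Q nu b : Z) (k : R) :=
  PI * (IZR P * IZR b ^ 2 * k ^ 2 - 2 * IZR P * IZR b ^ 2 * Ar P Q nu * k + IZR P * IZR Q * IZR b * k) / IZR Q.
Definition zk (P Q b : Z) (k : nat) := Cexpi (- 2 * PI * IZR P * IZR b ^ 2 * INR k / IZR Q).
Definition Kc (P Q nu : Z) :=
  Cmul (1 / IZR Q, 0) (Cmul (Cexpi (- PI * IZR P * beta P Q nu ^ 2 / IZR Q))
     (Csum (fun s => fZ P Q (Z.of_nat s)) (Z.to_nat Q))).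

Lemma Cscale_mul a z : Cscale a z = Cmul (a, 0) z.
Proof. destruct z; unfold Cscale, Cmul; simpl; f_equal; ring. Qed.

Lemma red_eq P Q : Z.gcd P Q = 1%Z -> red_p P Q = P /\ red_q P Q = Q.
Proof. intros H; unfold red_p, red_q; rewrite H, !Z.div_1_r; auto. Qed.

Lemma beta_eq P Q nu : beta P Q nu = IZR nu / IZR P + IZR Q / 2 - IZR (Nint P Q nu).
Proof. reflexivity. Qed.

Lemma fZ_period P Q u : (1 <= Q)%Z -> fZ P Q (u + Z.of_nat (Z.to_nat Q))%Z = fZ P Q u.
Proof.
  intros HQ. rewrite Z2Nat.id by lia. unfold fZ.
  apply Cexpi_eq with (k := (- P * (u + Q))%Z).
  unfold phi. rewrite plus_IZR, mult_IZR, opp_IZR, plus_IZR.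
  assert (IZR Q <> 0) by (apply not_0_IZR; lia). field. auto.
Qed.

Lemma G_formula P Q nu b v j k :
  P <> 0%Z -> (1 <= Q)%Z -> Z.gcd P Q = 1%Z -> (b * P + v * Q = 1)%Z ->
  G P Q nu j k = Cmul (Kc P Q nu)
     (Cmul (Cexpi (Ej P Q nu b (INR j))) (Cmul (Cexpi (Ek P Q nu b (INR k))) (Cpow (zk P Q b k) j))).
Proof.
  intros HP HQ Hg Hb.
  assert (Hq : IZR Q <> 0) by (apply not_0_IZR; lia).
  assert (Hp : IZR P <> 0) by (apply not_0_IZR; lia).
  destruct (red_eq P Q Hg) as [E1 E2].
  unfold G, a_coef. rewrite E1, E2, Cscale_mul.
  set (tZ := (- b * (Z.of_nat j - Z.of_nat k + AZ P Q nu))%Z).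
  set (E := - PI * IZR P * beta P Q nu ^ 2 / IZR Q + Ej P Q nu b (INR j) + Ek P Q nu b (INR k)
             + INR j * (- 2 * PI * IZR P * IZR b ^ 2 * INR k / IZR Q)).
  rewrite (Csum_ext _ (fun s => Cmul (Cexpi E) (fZ P Q (Z.of_nat s + tZ)%Z))).
  - rewrite Csum_scal, (Csum_shift (fZ P Q)) by (intros; apply fZ_period; auto).
    unfold Kc, zk, E. rewrite Cpow_expi, <- !Cexpi_add. ring.
  - intros s _. rewrite Cexpi_add. unfold fZ. rewrite Cexpi_add.
    apply Cexpi_eq with (k := (v * (Z.of_nat j - Z.of_nat k + AZ P Q nu) * Z.of_nat s)%Z).
    assert (Hv : IZR v = (1 - IZR b * IZR P) / IZR Q).
    { apply (f_equal IZR) in Hb. rewrite plus_IZR, !mult_IZR in Hb. assert (IZR v * IZR Q = 1 - IZR b * IZR P) as Hv2 by lra. rewrite <- Hv2. field. auto. }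
    unfold tZ, E, AZ, phi, Ej, Ek, Ar.
    repeat rewrite ?mult_IZR, ?plus_IZR, ?minus_IZR, ?opp_IZR. rewrite <- !INR_IZR_INZ, Hv.
    rewrite beta_eq, S_INR. field. auto.
Qed.

Lemma geo w n : Cmul (Csum (Cpow w) n) (Csub w C1) = Csub (Cpow w n) C1.
Proof. induction n; cbn [Csum Cpow]. unfold C0, C1, Cmul, Csub, Cadd, Copp; simpl; f_equal; ring.
  transitivity (Cadd (Cmul (Csum (Cpow w) n) (Csub w C1)) (Cmul (Cpow w n) (Csub w C1))). ring.
  rewrite IHn. ring. Qed.

Lemma Cexpi_diff a b : Cexpi a = Cexpi b -> exists m : Z, a - b = 2 * PI * IZR m.
Proof.
  intros H. apply Cexpi_one.
  replace (a - b) with (a + - b) by ring. rewrite <- Cexpi_add, H, Cexpi_add.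
  replace (b + - b) with 0 by ring. apply Cexpi_0.
Qed.

Lemma geo_sum (Q : Z) (s : nat) : (1 <= Q)%Z -> (0 < s < Z.to_nat Q)%nat ->
  Csum (fun m => Cexpi (2 * PI * INR s * (INR m - INR 0) / IZR Q)) (Z.to_nat Q) = C0.
Proof.
  intros HQ Hs.
  assert (Hq : IZR Q <> 0) by (apply not_0_IZR; lia).
  set (w := Cexpi (2 * PI * INR s / IZR Q)).
  rewrite (Csum_ext _ (Cpow w)).
  2:{ intros m _. unfold w. rewrite Cpow_expi. f_equal. simpl INR. field. auto. }
  assert (Hw : w <> C1).
  { intro E. unfold w in E. apply Cexpi_one in E. destruct E as [m Hm].
    assert (INR s = IZR m * IZR Q).
    { apply (Rmult_eq_reg_l (2 * PI)). 2:{ pose proof PI_RGT_0. lra. }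
      transitivity (2 * PI * INR s / IZR Q * IZR Q). field; auto. rewrite Hm. ring. }
    rewrite INR_IZR_INZ, <- mult_IZR in H. apply eq_IZR in H.
    clear -Hs HQ H. assert (Z.of_nat (Z.to_nat Q) = Q) by (apply Z2Nat.id; lia). assert (0 < Z.of_nat s < Q)%Z by lia. destruct (Z_le_gt_dec m 0); nia. }
  assert (Hwq : Cpow w (Z.to_nat Q) = C1).
  { unfold w. rewrite Cpow_expi, <- Cexpi_0. apply Cexpi_eq with (k := Z.of_nat s).
    rewrite INR_IZR_INZ, Z2Nat.id by lia. rewrite <- INR_IZR_INZ. field. auto. }
  pose proof (geo w (Z.to_nat Q)) as G0. rewrite Hwq in G0.
  assert (Hn : Csub w C1 <> C0).
  { intro E. apply Hw. transitivity (Cadd (Csub w C1) C1). ring. rewrite E. ring. }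
  transitivity (Cdiv (Cmul (Csum (Cpow w) (Z.to_nat Q)) (Csub w C1)) (Csub w C1)).
  field. auto. rewrite G0. field. auto.
Qed.

Lemma Kc_neq0 P Q nu b v :
  P <> 0%Z -> (1 <= Q)%Z -> Z.gcd P Q = 1%Z -> (b * P + v * Q = 1)%Z -> Kc P Q nu <> C0.
Proof.
  intros HP HQ Hg Hb HK.
  assert (Hq : IZR Q <> 0) by (apply not_0_IZR; lia).
  set (q := Z.to_nat Q).
  assert (Z0 : Csum (fun m => G P Q nu m 0) q = C0).
  { apply Csum_zero. intros. rewrite (G_formula P Q nu b v) by auto. rewrite HK. ring. }
  unfold G in Z0. rewrite (Csum_ext _ (fun m => Cmul (1 / IZR Q, 0) (Csum
        (fun s => Cmul (Cexpi (2 * PI * INR s * (INR m - INR 0) / IZR Q)) (a_coef P Q nu (S s))) q))) in Z0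
    by (intros; apply Cscale_mul).
  rewrite Csum_scal, Csum_swap in Z0.
  rewrite (Csum_ext _ (fun s => Cmul (a_coef P Q nu (S s)) (Csum (fun m => Cexpi (2 * PI * INR s * (INR m - INR 0) / IZR Q)) q))) in Z0.
  2:{ intros. rewrite <- Csum_scal. apply Csum_ext. intros. ring. }
  rewrite Csum_delta0 in Z0.
  3:{ intros i Hi. unfold q. rewrite geo_sum by (auto; lia). ring. }
  2:{ unfold q; lia. }
  rewrite (Csum_ext _ (fun _ => C1)) in Z0.
  2:{ intros. rewrite <- Cexpi_0. f_equal. simpl INR. field. auto. }
  assert (Hs : forall n, Csum (fun _ => C1) n = (INR n, 0)).
  { induction n. reflexivity. cbn [Csum]. rewrite IHn, S_INR. unfold Cadd, C1; simpl; f_equal; ring. }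
  rewrite Hs in Z0. unfold q in Z0. rewrite INR_IZR_INZ, Z2Nat.id in Z0 by lia.
  apply (Cexpi_neq0 (- PI * IZR (red_p P Q) * (INR 1 + beta P Q nu - 1) ^ 2 / IZR (red_q P Q))).
  fold (a_coef P Q nu 1).
  rewrite <- Z0. unfold Cmul; destruct (a_coef P Q nu 1); simpl. f_equal; field; auto.
Qed.

Lemma zk_distinct P Q b v k k' :
  (1 <= Q)%Z -> (b * P + v * Q = 1)%Z ->
  (1 <= k < Z.to_nat Q + 1)%nat -> (1 <= k' < Z.to_nat Q + 1)%nat -> k <> k' ->
  zk P Q b k <> zk P Q b k'.
Proof.
  intros HQ Hb Hk Hk' Hne E.
  assert (Hq : IZR Q <> 0) by (apply not_0_IZR; lia).
  unfold zk in E. apply Cexpi_diff in E. destruct E as [m Hm].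
  set (r := (Z.of_nat k' - Z.of_nat k)%Z).
  assert (Hr : (P * b * b * r = m * Q)%Z).
  { apply eq_IZR. unfold r. repeat rewrite ?mult_IZR, ?minus_IZR. rewrite <- !INR_IZR_INZ.
    assert (PI <> 0) by (pose proof PI_RGT_0; lra).
    transitivity ((-2*PI*IZR P*IZR b^2*INR k/IZR Q - -2*PI*IZR P*IZR b^2*INR k'/IZR Q) * IZR Q / (2*PI)).
    field; auto. rewrite Hm. field; auto. }
  assert (H1 : (b * r = (m + v * b * r) * Q)%Z).
  { transitivity (b * r * (b * P + v * Q))%Z. rewrite Hb; ring.
    transitivity (P * b * b * r + v * b * r * Q)%Z. ring. rewrite Hr. ring. }
  assert (H2 : (r = (P * (m + v * b * r) + v * r) * Q)%Z).
  { transitivity (r * (b * P + v * Q))%Z. rewrite Hb; ring.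
    transitivity (P * (b * r) + v * r * Q)%Z. ring. rewrite H1. ring. }
  set (n := (P * (m + v * b * r) + v * r)%Z) in H2.
  assert (Z.of_nat (Z.to_nat Q) = Q) by (apply Z2Nat.id; lia).
  assert (r <> 0%Z) by (unfold r; lia).
  assert (- Q < r < Q)%Z by (unfold r; lia).
  destruct (Z_le_gt_dec n 0); [destruct (Z.eq_dec n 0)|]; nia.
Qed.

Theorem lemma2 (P Q nu : Z) :
  (1 <= Q)%Z -> P <> 0%Z -> Z.gcd P Q = 1%Z ->
  nonsingular (dim_d Q) (G P Q nu).
Proof.
  intros HQ HP Hg x Hx k Hk.
  destruct (Z.gcd_bezout P Q 1 Hg) as [b [v Hb]].
  assert (Hdq : (dim_d Q <= Z.to_nat Q)%nat).
  { unfold dim_d. apply Z2Nat.inj_le. apply Z.div_pos; lia. lia.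
    apply Z.div_le_upper_bound; lia. }
  assert (HK := Kc_neq0 P Q nu b v HP HQ Hg Hb).
  set (w := fun k => Cmul (Cexpi (Ek P Q nu b (INR k))) (x k)).
  assert (Hw : w k = C0).
  { apply (vander (dim_d Q) (zk P Q b) w); auto.
    - intros k1 k2 H1 H2 H3. apply (zk_distinct P Q b v); auto; lia.
    - intros; apply Cexpi_neq0.
    - intros j Hj. specialize (Hx j Hj).
      rewrite (Csum_ext _ (fun i => Cmul (Cmul (Kc P Q nu) (Cexpi (Ej P Q nu b (INR j))))
                    (Cmul (Cpow (zk P Q b (S i)) j) (w (S i))))) in Hx.
      2:{ intros. rewrite (G_formula P Q nu b v) by auto. unfold w. ring. }
      rewrite Csum_scal in Hx.
      pose proof (Cexpi_neq0 (Ej P Q nu b (INR j))) as HE.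
      set (T := Csum (fun i => Cmul (Cpow (zk P Q b (S i)) j) (w (S i))) (dim_d Q)) in *.
      transitivity (Cdiv (Cdiv (Cmul (Cmul (Kc P Q nu) (Cexpi (Ej P Q nu b (INR j)))) T) (Kc P Q nu)) (Cexpi (Ej P Q nu b (INR j)))).
      field; auto. rewrite Hx. field; auto. }
  pose proof (Cexpi_neq0 (Ek P Q nu b (INR k))) as HE.
  transitivity (Cdiv (w k) (Cexpi (Ek P Q nu b (INR k)))).
  unfold w. field; auto. rewrite Hw. field; auto.
Qed.
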